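(* For $n\geq 5$, in the Waiter-Client game on $K_n$, Waiter can force Client to build a red Hamilton path within $n-1$ rounds such that one of its endpoints is incident with at most two blue edges.
   Context: Waiter-Client game on $K_n$: in each round Waiter offers two free edges of $K_n$, Client colors one of them red and the other becomes blue. *)

(* Defs.v *)
From mathcomp Require Import all_boot.
Set Implicit Arguments. Unset Strict Implicit. Unset Printing Implicit Defensive.

(* Vertices of K_n are 'I_n; an edge of K_n is a 2-element subset of 'I_n.
   A game position is a pair (R, B) of sets of edges: red and blue edges. *)
Definition is_edge (n : nat) (e : {set 'I_n}) : bool := #|e| == 2.

Definition free_edge (n : nat) (R B : {set {set 'I_n}}) (e : {set 'I_n}) : bool :=
  is_edge e && (e \notin R) && (e \notin B).

Definition red_adj (n : nat) (R : {set {set 'I_n}}) : rel 'I_n :=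
  fun x y => [set x; y] \in R.

Definition blue_deg (n : nat) (B : {set {set 'I_n}}) (v : 'I_n) : nat :=
  #|[set e in B | v \in e]|.

Definition goal (n : nat) (R B : {set {set 'I_n}}) : Prop :=
  exists (x : 'I_n) (s : seq 'I_n),
    [/\ uniq (x :: s), size (x :: s) = n, path (red_adj R) x s &
        (blue_deg B x <= 2 \/ blue_deg B (last x s) <= 2)].

(* In a round, Waiter offers two distinct free edges
   e1, e2; Client colours one red and the other becomes blue. *)
Fixpoint waiter_wins (n k : nat) (R B : {set {set 'I_n}}) : Prop :=
  match k with
  | 0 => goal R B
  | k'.+1 => goal R B \/
      exists e1 e2 : {set 'I_n},
        [/\ free_edge R B e1, free_edge R B e2, e1 != e2,
            waiter_wins k' (e1 |: R) (e2 |: B) &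
            waiter_wins k' (e2 |: R) (e1 |: B)]
  end.

(* Main.v *)
Require Import Defs.
From mathcomp Require Import all_boot.
Set Implicit Arguments. Unset Strict Implicit. Unset Printing Implicit Defensive.

Record inv n (R B : {set {set 'I_n}}) (x : 'I_n) (s : seq 'I_n) : Prop := Inv {
 i_uniq : uniq (x :: s); i_size : 0 < size s; i_path : path (red_adj R) x s;
 i_red : forall e w, e \in R -> w \in e -> w \in x :: s;
 i_blue : forall e u w, e \in B -> u \notin x :: s -> u \in e -> w \in e ->
       w = u \/ [/\ w \in x :: s, w != x & w != last x s];
 i_deg : forall u e1 e2, u \notin x :: s -> e1 \in B -> e2 \in B -> u \in e1 -> u \in e2 -> e1 = e2}.

Lemma deg_new n (B : {set {set 'I_n}}) f v :
  (forall e1 e2, e1 \in B -> e2 \in B -> v \in e1 -> v \in e2 -> e1 = e2) ->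
  blue_deg ([set f; v] |: B) v <= 2.
Proof.
move=> H; rewrite /blue_deg.
have sub : [set e in [set f; v] |: B | v \in e] \subset [set f; v] |: [set e in B | v \in e].
  apply/subsetP => e; rewrite !inE => /andP[/orP[->|->] ->] //; by rewrite orbT.
apply: leq_trans (subset_leq_card sub) _; rewrite cardsU1.
have h : #|[set e in B | v \in e]| <= 1.
  apply/card_le1_eqP => e1 e2; rewrite !inE => /andP[h1 h2] /andP[h3 h4]; exact: H.
by case: (_ \notin _); rewrite ?add1n ?add0n ?ltnS // (leq_trans h).
Qed.

Lemma neq_last n (x : 'I_n) s : uniq (x :: s) -> 0 < size s -> x != last x s.
Proof.
case/lastP: s => [|s' y] //= /andP[hx _] _; rewrite last_rcons.
apply: contraNneq hx => ->; by rewrite mem_rcons mem_head.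
Qed.

Lemma free_lem n (R B : {set {set 'I_n}}) x s v : inv R B x s -> v \notin x :: s ->
  [/\ free_edge R B [set x; v], free_edge R B [set last x s; v] & [set x; v] != [set last x s; v]].
Proof.
case=> U S P I2 I3 I4 Hv.
have xv : x != v by apply: contraNneq Hv => <-; rewrite mem_head.
have lv : last x s != v by apply: contraNneq Hv => <-; rewrite mem_last.
have xl := neq_last U S.
split.
- rewrite /free_edge /is_edge cards2 xv /=; apply/andP; split.
  + apply/negP => h; move: (I2 _ v h); rewrite !inE eqxx orbT => /(_ isT) hh; by move: Hv; rewrite !inE hh.
  + apply/negP => h; move: (I3 _ v x h Hv); rewrite !inE !eqxx orbT => /(_ isT isT).
    by case=> [/eqP|[_ /eqP]]; rewrite ?(negbTE xv).
- rewrite /free_edge /is_edge cards2 lv /=; apply/andP; split.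
  + apply/negP => h; move: (I2 _ v h); rewrite !inE eqxx orbT => /(_ isT) hh; by move: Hv; rewrite !inE hh.
  + apply/negP => h; move: (I3 _ v (last x s) h Hv); rewrite !inE !eqxx orbT => /(_ isT isT).
    by case=> [/eqP|[_ _ /eqP]]; rewrite ?(negbTE lv).
- apply/negP => /eqP E; have : x \in [set last x s; v] by rewrite -E !inE eqxx.
  rewrite !inE (negbTE xv) orbF => /eqP hx; by move: xl; rewrite {1}hx eqxx.
Qed.

Lemma sub_red n (R : {set {set 'I_n}}) e : subrel (red_adj R) (red_adj (e |: R)).
Proof. by move=> a b; rewrite /red_adj inE => ->; rewrite orbT. Qed.

Lemma inv_pre n (R B : {set {set 'I_n}}) x s v : inv R B x s -> v \notin x :: s ->
  inv ([set x; v] |: R) ([set last x s; v] |: B) v (x :: s) /\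
  blue_deg ([set last x s; v] |: B) v <= 2.
Proof.
case=> U S P I2 I3 I4 Hv.
split; last first.
  apply: deg_new => e1 e2 h1 h2; exact: I4 Hv h1 h2.
split => //.
- by rewrite cons_uniq Hv U.
- rewrite /= {1}/red_adj setUC setU11 /=. exact: (sub_path (@sub_red _ R [set x; v]) P).
- move=> e w /setU1P[->|hR] hw; last by rewrite inE (I2 _ _ hR hw) orbT.
  by move: hw; rewrite !inE => /orP[->|->]; rewrite ?orbT.
- move=> e u w /setU1P[->|hB] hu.
    rewrite !inE => /orP[/eqP E|/eqP E]; exfalso; move: hu; rewrite E.
      by rewrite inE mem_last orbT.
    by rewrite mem_head.
  have hu' : u \notin x :: s by move: hu; rewrite inE negb_or => /andP[].
  move=> he hw; case: (I3 e u w hB hu' he hw) => [->|[h1 h2 h3]]; first by left.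
  right; split => //; first by rewrite inE h1 orbT.
  by apply: contraNneq Hv => <-.
- move=> u e1 e2 hu.
  have hu' : u \notin x :: s by move: hu; rewrite inE negb_or => /andP[].
  have nl : forall e, e \in [set last x s; v] |: B -> u \in e -> e \in B.
    move=> e /setU1P[->|//]; rewrite !inE => /orP[/eqP E|/eqP E]; exfalso; move: hu; rewrite E.
      by rewrite inE mem_last orbT.
    by rewrite mem_head.
  move=> h1 h2 a1 a2; exact: I4 hu' (nl _ h1 a1) (nl _ h2 a2) a1 a2.
Qed.

Lemma inv_app n (R B : {set {set 'I_n}}) x s v : inv R B x s -> v \notin x :: s ->
  inv ([set last x s; v] |: R) ([set x; v] |: B) x (rcons s v) /\
  blue_deg ([set x; v] |: B) v <= 2.
Proof.
case=> U S P I2 I3 I4 Hv.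
have memr : forall w, (w \in x :: rcons s v) = (w == v) || (w \in x :: s).
  move=> w; rewrite -rcons_cons mem_rcons inE //.
split; last first.
  apply: deg_new => e1 e2 h1 h2; exact: I4 Hv h1 h2.
split => //.
- by rewrite -rcons_cons rcons_uniq Hv U.
- by rewrite size_rcons.
- rewrite rcons_path; apply/andP; split; first exact: (sub_path (@sub_red _ R [set last x s; v]) P).
  by rewrite /red_adj setU11.
- move=> e w /setU1P[->|hR] hw; last by rewrite memr (I2 _ _ hR hw) orbT.
  rewrite memr; move: hw; rewrite in_set2 => /orP[/eqP->|->]; last by [].
  by rewrite mem_last orbT.
- move=> e u w /setU1P[->|hB] hu.
    rewrite !inE => /orP[/eqP E|/eqP E]; exfalso; move: hu; rewrite E memr.
      by rewrite mem_head orbT.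
    by rewrite eqxx.
  have hu' : u \notin x :: s by move: hu; rewrite memr negb_or => /andP[].
  move=> he hw; case: (I3 e u w hB hu' he hw) => [->|[h1 h2 h3]]; first by left.
  right; split => //; first by rewrite memr h1 orbT.
  rewrite last_rcons; by apply: contraNneq Hv => <-.
- move=> u e1 e2 hu.
  have hu' : u \notin x :: s by move: hu; rewrite memr negb_or => /andP[].
  have nl : forall e, e \in [set x; v] |: B -> u \in e -> e \in B.
    move=> e /setU1P[->|//]; rewrite !inE => /orP[/eqP E|/eqP E]; exfalso; move: hu; rewrite E memr.
      by rewrite mem_head orbT.
    by rewrite eqxx.
  move=> h1 h2 a1 a2; exact: I4 hu' (nl _ h1 a1) (nl _ h2 a2) a1 a2.
Qed.

Lemma ex_out n (x : 'I_n) s k : size (x :: s) + k.+1 = n -> exists v, v \notin x :: s.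
Proof.
move=> Hs; case: (pickP (fun v => v \notin x :: s)) => [v Hv|H]; first by exists v.
exfalso; have : #|'I_n| <= size (x :: s).
  apply: leq_trans (card_size (x :: s)); apply: subset_leq_card.
  by apply/subsetP => y _; move: (H y) => /= /negbFE.
rewrite card_ord => h.
have : size (x :: s) < size (x :: s) + k.+1 by rewrite addnS ltnS leq_addr.
rewrite Hs.
by rewrite ltnNge h.
Qed.

Lemma main n k : forall (R B : {set {set 'I_n}}) x s, inv R B x s ->
  size (x :: s) + k.+1 = n -> waiter_wins k.+1 R B.
Proof.
elim: k => [|k IH] R B x s Hi Hs.
all: have [v Hv] : exists v, v \notin x :: s by apply: ex_out Hs.
all: right; case: (free_lem Hi Hv) => F1 F2 D; exists [set x; v], [set last x s; v]; split => //.
all: have [[U1 S1 P1 _ _ _] d1] := inv_pre Hi Hv.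
all: have [[U2 S2 P2 _ _ _] d2] := inv_app Hi Hv.
- exists v, (x :: s); split => //; [by apply: (etrans _ Hs); rewrite addn1 | by left].
- exists x, (rcons s v); split => //; first by apply: (etrans _ Hs); rewrite /= size_rcons addn1.
  by right; rewrite last_rcons.
- apply: IH (proj1 (inv_pre Hi Hv)) _; by apply: (etrans _ Hs); rewrite /= addSnnS.
- apply: IH (proj1 (inv_app Hi Hv)) _; by apply: (etrans _ Hs); rewrite /= size_rcons addSnnS.
Qed.

Lemma neq_sym (T : eqType) (a b : T) : a != b -> b != a.
Proof. by rewrite eq_sym. Qed.

Ltac kill := repeat match goal with H : is_true (negb (?a == ?b)) |- _ =>
  rewrite ?(negbTE H) ?(negbTE (neq_sym H)) /=; clear H end.

Lemma set2C (T : finType) (a b : T) : [set a; b] = [set b; a].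
Proof. by rewrite setUC. Qed.

Lemma set2_ne (T : finType) (a b x : T) : b != a -> b != x -> [set a; b] != [set a; x].
Proof.
move=> h1 h2; apply/negP => /eqP E; have : b \in [set a; x] by rewrite -E !inE eqxx orbT.
by rewrite !inE (negbTE h1) (negbTE h2).
Qed.

Lemma start_inv n (a x y z z' : 'I_n) : uniq [:: a; x; y; z; z'] ->
  inv ([set a; z] |: ([set a; x] |: set0)) ([set a; z'] |: ([set a; y] |: set0)) x [:: a; z].
Proof.
rewrite /= !inE !negb_or.
move=> /andP[/and4P[ax ay az az'] /andP[/and3P[xy xz xz'] /andP[/andP[yz yz'] /andP[zz' _]]]].
split.
- by rewrite /= !inE; kill.
- by [].
- by rewrite /= /red_adj (set2C x a) !inE !eqxx ?orbT.
- move=> e w /setU1P[->|/setU1P[->|]]; rewrite ?in_set0 // !inE => /orP[]/eqP->;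
  by rewrite eqxx ?orbT.
- move=> e u w /setU1P[->|/setU1P[->|]]; rewrite ?in_set0 // => hu;
  rewrite !in_set2 => /orP[]/eqP hu' /orP[]/eqP hw; subst;
  try (by move: hu; rewrite !inE eqxx ?orbT); try (by left);
  right; split; rewrite /= ?inE ?eqxx ?orbT //; kill.
- move=> u e1 e2 hu.
  move=> /setU1P[->|/setU1P[->|]]; rewrite ?in_set0 //;
  move=> /setU1P[->|/setU1P[->|]]; rewrite ?in_set0 // !in_set2;
  move=> /orP[]/eqP h1 /orP[]/eqP h2; subst; try done;
  try (by move: hu; rewrite !inE eqxx ?orbT); kill.
Qed.

Lemma round2 m (a x y b c : 'I_(m.+4.+1)) : uniq [:: a; x; y; b; c] ->
  waiter_wins m.+3 ([set a; x] |: set0) ([set a; y] |: set0).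
Proof.
move=> U; right; exists [set a; b], [set a; c].
have U' := U; move: U'; rewrite /= !inE !negb_or.
move=> /andP[/and4P[ax ay ab ac] /andP[/and3P[xy xb xc] /andP[/andP[yb yc] /andP[bc _]]]].
split.
- rewrite /free_edge /is_edge cards2 ab /= !inE !negb_or ?orbF.
  by rewrite (set2_ne (neq_sym ab) (neq_sym xb)) (set2_ne (neq_sym ab) (neq_sym yb)).
- rewrite /free_edge /is_edge cards2 ac /= !inE !negb_or ?orbF.
  by rewrite (set2_ne (neq_sym ac) (neq_sym xc)) (set2_ne (neq_sym ac) (neq_sym yc)).
- by rewrite (set2_ne (neq_sym ab) bc).
- apply: (@main _ m.+1 _ _ x [:: a; b]); last by [].
  apply: start_inv; by rewrite /= !inE; kill.
- apply: (@main _ m.+1 _ _ x [:: a; c]); last by [].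
  apply: start_inv; by rewrite /= !inE; kill.
Qed.

Lemma ne_inord m i j : i < m.+1 -> j < m.+1 -> i != j -> (inord i : 'I_m.+1) != inord j.
Proof.
move=> hi hj hij; apply/negP => /eqP /(congr1 (@nat_of_ord _)); rewrite !inordK // => /eqP.
by rewrite (negbTE hij).
Qed.

Lemma round1 m (a x y b c : 'I_(m.+4.+1)) : uniq [:: a; x; y; b; c] ->
  waiter_wins m.+4 (set0 : {set {set 'I_(m.+4.+1)}}) set0.
Proof.
move=> U; right; exists [set a; x], [set a; y].
have U' := U; move: U'; rewrite /= !inE !negb_or.
move=> /andP[/and4P[ax ay ab ac] /andP[/and3P[xy xb xc] /andP[/andP[yb yc] /andP[bc _]]]].
split.
- by rewrite /free_edge /is_edge cards2 ax /= !inE.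
- by rewrite /free_edge /is_edge cards2 ay /= !inE.
- by rewrite (set2_ne (neq_sym ax) xy).
- by apply: (round2 (b := b) (c := c)).
- apply: (round2 (b := b) (c := c)); by rewrite /= !inE; kill.
Qed.

Theorem lemma3p1 (n : nat) (hn : 5 <= n) :
  waiter_wins (n - 1) (set0 : {set {set 'I_n}}) set0.
Proof.
case: n hn => [|[|[|[|[|m]]]]] // _.
rewrite subn1 /=.
apply: (@round1 m (inord 0) (inord 1) (inord 2) (inord 3) (inord 4)).
rewrite /= !inE !negb_or.
by rewrite !ne_inord.
Qed.
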